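(* Let $T=(V,E)$ be a tree rooted at $o$ with edge lengths $\ell:E\to\mathbb{R}_{>0}$ and let $F>0$. For any $X_1,X_2,X_3,X_4\subseteq V$, $$\mathrm{cost}(X_1\cup X_2\mid X_3)\le \mathrm{cost}(X_1)+\mathrm{cost}(X_2\mid X_3),$$ $$\mathrm{cost}(X_2\cup X_3)+\mathrm{cost}(X_1\mid X_2\cup X_3)+\mathrm{cost}(X_4\mid X_2\cup X_3)\le \mathrm{cost}(X_1\cup X_2)+\mathrm{cost}(X_3\cup X_4).$$
   Context: $V_v$ is the set of descendants of $v$ in $T$ (including $v$); for an edge $e=(u,v)$ with $v$ the child, $V_e=V_v$. For $X\subseteq V$, $\mathrm{mst}(X)$ is the total length of the minimal subtree of $T$ containing $X\cup\{o\}$, and $\mathrm{mst}_e(X)=\mathrm{mst}(V_e\cap X)$. $c(X,e)=\lceil \mathrm{mst}_e(X)/F\rceil$ for $e\in E$, $\mathrm{cost}(X)=2\sum_{e\in E}c(X,e)\ell(e)$. For $X,X'\subseteq V$ and $e\in E$: $c(X,e\mid X')=\lceil \mathrm{mst}_e(X)/F\rceil$ if $V_e\cap X'=\emptyset$, and $c(X,e\mid X')=\lfloor(\mathrm{mst}_e(X'\cup X)-\mathrm{mst}_e(X'))/F\rfloor$ otherwise; $\mathrm{cost}(X\mid X')=2\sum_{e\in E}c(X,e\mid X')\ell(e)$. *)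

(* Defs.v *)
From HB Require Import structures.
From mathcomp Require Import all_boot all_order all_algebra.
From mathcomp Require Import reals.
Set Implicit Arguments. Unset Strict Implicit. Unset Printing Implicit Defensive.
Import Order.TTheory GRing.Theory Num.Theory.
Local Open Scope ring_scope.

(* A finite rooted tree on vertex set T with root o, given by a parent map:
   every non-root vertex v has parent (parent v); the edges are the pairs
   (parent v, v) for v != o, so edges are identified with their child vertex. *)
Definition rooted_tree (T : finType) (o : T) (parent : T -> T) : Prop :=
  parent o = o /\ forall v : T, exists k : nat, iter k parent v = o.

Section Cost.
Variables (R : realType) (T : finType) (o : T) (parent : T -> T).
Variables (len : T -> R) (F : R).

(* x is a descendant of v (including v itself): v is an ancestor of x.
   (Ancestors of x are reached within #|T| parent steps.) *)
Definition desc (v x : T) : bool :=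
  [exists k : 'I_#|T|.+1, iter k parent x == v].

(* V_v, the set of descendants of v; for the edge e = (parent v, v), V_e = V_v *)
Definition Vsub (v : T) : {set T} := [set x | desc v x].

(* mst X : total length of the minimal subtree containing X ∪ {o}, i.e. of
   the union of the root paths of the vertices of X: the edge (parent v, v)
   lies on the root path of x iff x is a descendant of v. *)
Definition mst (X : {set T}) : R :=
  \sum_(v | (v != o) && [exists x in X, desc v x]) len v.

Definition mst_e (X : {set T}) (v : T) : R := mst (Vsub v :&: X).

Definition c (X : {set T}) (v : T) : int := Num.ceil (mst_e X v / F).

Definition cost (X : {set T}) : R :=
  2 * \sum_(v | v != o) (c X v)%:~R * len v.

Definition c_cond (X X' : {set T}) (v : T) : int :=
  if Vsub v :&: X' == set0 then Num.ceil (mst_e X v / F)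
  else Num.floor ((mst_e (X' :|: X) v - mst_e X' v) / F).

Definition cost_cond (X X' : {set T}) : R :=
  2 * \sum_(v | v != o) (c_cond X X' v)%:~R * len v.

End Cost.

(* Main.v *)
Require Import Defs.
From HB Require Import structures.
From mathcomp Require Import all_boot all_order all_algebra.
From mathcomp Require Import reals.
From mathcomp Require Import lra.
Import Order.TTheory GRing.Theory Num.Theory.
Local Open Scope ring_scope.

Section Aux.
Variable R : realType.

Lemma lt_int_le (z1 z2 : int) : (z1%:~R : R) < z2%:~R + 1 -> (z1 <= z2)%R.
Proof. by move=> h; rewrite -ltzD1 -(ltr_int R) intrD. Qed.

Lemma ceil_lt (x : R) : (Num.ceil x)%:~R < x + 1.
Proof. by have := ceilB1_lt x; rewrite intrB /=; lra. Qed.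

Variables (T : finType) (o : T) (parent : T -> T) (len : T -> R).
Hypothesis Hlen : forall v : T, v != o -> 0 < len v.

Definition ind (X : {set T}) (w : T) : R :=
  if [exists x in X, desc parent w x] then len w else 0.

Lemma mstE X : mst o parent len X = \sum_(w | w != o) ind X w.
Proof. by rewrite /mst big_mkcondr. Qed.

Lemma exU (A B : {set T}) w : [exists x in A :|: B, desc parent w x] =
  [exists x in A, desc parent w x] || [exists x in B, desc parent w x].
Proof.
apply/existsP/idP.
- case=> x /andP[]; rewrite inE => /orP[] xa d.
  + by apply/orP; left; apply/existsP; exists x; rewrite xa.
  + by apply/orP; right; apply/existsP; exists x; rewrite xa.
- by case/orP=> /existsP[x /andP[xa d]]; exists x; rewrite inE xa ?orbT.
Qed.

Lemma exS (A B : {set T}) w : A \subset B -> [exists x in A, desc parent w x] ->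
  [exists x in B, desc parent w x].
Proof.
move=> /subsetP s /existsP[x /andP[xa d]]; apply/existsP; exists x.
by rewrite s.
Qed.
Arguments exS {A B w}.

Lemma mst_mono (A B : {set T}) : A \subset B -> mst o parent len A <= mst o parent len B.
Proof.
move=> s; rewrite !mstE; apply: ler_sum => w wo; rewrite /ind.
case: ifP => h; first by rewrite (exS s h).
by case: ifP => _ //; apply: ltW; apply: Hlen.
Qed.

Lemma mst_submod (A B : {set T}) : mst o parent len (A :|: B) + mst o parent len (A :&: B)
  <= mst o parent len A + mst o parent len B.
Proof.
rewrite !mstE -!big_split /=; apply: ler_sum => w wo; rewrite /ind exU.
have hI : [exists x in A :&: B, desc parent w x] ->
   [exists x in A, desc parent w x] && [exists x in B, desc parent w x].
  by move=> h; rewrite (exS (subsetIl A B) h) (exS (subsetIr A B) h).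
have lp := Hlen _ wo.
move: hI.
case: [exists x in A :&: B, desc parent w x];
case: [exists x in A, desc parent w x];
case: [exists x in B, desc parent w x] => //=; try by move/(_ isT).
all: move=> _; lra.
Qed.

Lemma mst_ge0 (A : {set T}) : 0 <= mst o parent len A.
Proof.
rewrite mstE; apply: sumr_ge0 => w wo; rewrite /ind; case: ifP => // _.
exact: ltW (Hlen _ wo).
Qed.

Lemma mst_sub (A B : {set T}) : mst o parent len (A :|: B) <= mst o parent len A + mst o parent len B.
Proof. have := mst_submod A B; have := mst_ge0 (A :&: B); lra. Qed.

Lemma mst0 : mst o parent len set0 = 0.
Proof.
rewrite mstE big1 // => w _; rewrite /ind; case: ifP => //.
by case/existsP=> x; rewrite inE.
Qed.

End Aux.

Theorem lemma4p3 (R : realType) (T : finType) (o : T) (parent : T -> T)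
  (len : T -> R) (F : R)
  (Htree : rooted_tree o parent)
  (Hlen : forall v : T, v != o -> 0 < len v)
  (HF : 0 < F)
  (X1 X2 X3 X4 : {set T}) :
  cost_cond o parent len F (X1 :|: X2) X3
    <= cost o parent len F X1 + cost_cond o parent len F X2 X3
  /\
  cost o parent len F (X2 :|: X3)
    + cost_cond o parent len F X1 (X2 :|: X3)
    + cost_cond o parent len F X4 (X2 :|: X3)
    <= cost o parent len F (X1 :|: X2) + cost o parent len F (X3 :|: X4).
Proof.
set m := fun X v => mst_e o parent len X v.
have mono : forall v (A B : {set T}), A \subset B -> m A v <= m B v.
  move=> v A B s; apply: mst_mono => //; exact: setIS.
have sub : forall v (A B : {set T}), m (A :|: B) v <= m A v + m B v.
  by move=> v A B; rewrite /m /mst_e setIUr; apply: mst_sub.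
have submod : forall v (A B : {set T}), m (A :|: B) v + m (A :&: B) v <= m A v + m B v.
  move=> v A B; rewrite /m /mst_e setIUr setIIr; apply: mst_submod => //.
have divle : forall a b : R, a <= b -> a / F <= b / F.
  by move=> a b h; rewrite ler_pM2r // invr_gt0.
split.
- rewrite /cost /cost_cond -mulrDr ler_pM2l // -big_split /=.
  apply: ler_sum => v vo; rewrite -mulrDl ler_pM2r ?Hlen // -intrD ler_int.
  rewrite /c /c_cond; case: ifP => _.
  + apply: (@lt_int_le R); rewrite intrD.
    have := ceil_lt R (mst_e o parent len (X1 :|: X2) v / F).
    have := ceil_ge (mst_e o parent len X1 v / F).
    have := ceil_ge (mst_e o parent len X2 v / F).
    have := divle _ _ (sub v X1 X2); rewrite mulrDl /m; lra.
  + apply: (@lt_int_le R); rewrite intrD.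
    have := floor_le ((mst_e o parent len (X3 :|: (X1 :|: X2)) v
       - mst_e o parent len X3 v) / F).
    have := ceil_ge (mst_e o parent len X1 v / F).
    have := floorD1_gt ((mst_e o parent len (X3 :|: X2) v
       - mst_e o parent len X3 v) / F); rewrite intrD.
    have := divle _ _ (sub v X1 (X3 :|: X2)).
    rewrite (_ : X1 :|: (X3 :|: X2) = X3 :|: (X1 :|: X2)); last first.
      by apply/setP=> x; rewrite !inE; do !case: (_ \in _).
    rewrite !mulrDl ?mulNr /m; lra.
- rewrite /cost /cost_cond -!mulrDr ler_pM2l // -!big_split /=.
  apply: ler_sum => v vo; rewrite -!mulrDl ler_pM2r ?Hlen // -!intrD ler_int.
  rewrite /c /c_cond; case: ifP => /eqP hY.
  + have h0 : forall A : {set T}, A \subset X2 :|: X3 -> m A v = 0.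
      move=> A s; rewrite /m /mst_e.
      have -> : Vsub parent v :&: A = set0.
        apply/eqP; rewrite -subset0 -hY; exact: setIS.
      by rewrite mst0.
    have := h0 (X2 :|: X3) (subxx _); rewrite /m => ->; rewrite mul0r ceil0 add0r.
    apply: lerD; apply: le_ceil; apply: divle.
    * apply: (@le_trans _ _ (m (X1 :|: X2) v)); first by apply: mono; apply: subsetUl.
      have := sub v X1 X2; rewrite [m X2 v]h0 ?subsetUl //; lra.
    * apply: (@le_trans _ _ (m (X3 :|: X4) v)); first by apply: mono; apply: subsetUr.
      have := sub v X3 X4; rewrite [m X3 v]h0 ?subsetUr //; lra.
  + apply: (@lt_int_le R); rewrite !intrD.
    set Y := X2 :|: X3.
    have s1 : m (Y :|: X1) v + m X2 v <= m (X1 :|: X2) v + m Y v.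
      have := submod v (X1 :|: X2) Y.
      have := mono v X2 ((X1 :|: X2) :&: Y).
      rewrite subsetI subsetUr subsetUl => /(_ isT).
      rewrite (_ : (X1 :|: X2) :|: Y = Y :|: X1); first lra.
      by apply/setP=> x; rewrite /Y !inE; do !case: (_ \in _).
    have s4 : m (Y :|: X4) v + m X3 v <= m (X3 :|: X4) v + m Y v.
      have := submod v (X3 :|: X4) Y.
      have := mono v X3 ((X3 :|: X4) :&: Y).
      rewrite subsetI subsetUl subsetUr ?orbT => /(_ isT).
      rewrite (_ : (X3 :|: X4) :|: Y = Y :|: X4); first lra.
      by apply/setP=> x; rewrite /Y !inE; do !case: (_ \in _).
    have sY := sub v X2 X3.
    have := ceil_lt R (m Y v / F).
    have := floor_le ((m (Y :|: X1) v - m Y v) / F).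
    have := floor_le ((m (Y :|: X4) v - m Y v) / F).
    have := ceil_ge (m (X1 :|: X2) v / F).
    have := ceil_ge (m (X3 :|: X4) v / F).
    have := divle _ _ s1; have := divle _ _ s4; have := divle _ _ sY.
    rewrite /m !mulrDl ?mulNr; lra.
Qed.
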